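(* Let a program execution be a finite sequence of heaps $h_0,h_1,\dots,h_n$, where $h_0$ is the initial heap in which the only allocated object is the special object $\mathit{Void}$, which is open, and each $h_{i+1}$ is obtained from $h_i$ by one elementary step: either allocating a fresh object, or updating a single attribute $x.a$ of an allocated object $x$ to a value $y$ (giving the heap $h_i[x.a\mapsto y]$). Every object $o$ has a class invariant $o.\mathit{inv}$, a Boolean expression evaluated in a heap. Consider a verification methodology $M$ whose proof obligations guarantee, for every step of every execution of a program that satisfies them: (a) every freshly allocated object is open; (b) whenever $x.\mathit{closed}$ is updated to $\mathit{True}$, $x.\mathit{inv}$ holds in the state before the step; (c) whenever an attribute $x.a$ with $a\neq\mathit{closed}$ is updated to some value $y$ in heap $h$, every object $o$ concerned with this update satisfies $(o.\mathit{closed}\wedge o.\mathit{inv})_h \Rightarrow (o.\mathit{inv})_{h[x.a\mapsto y]}$; (d) class invariants depend neither on the attribute $\mathit{closed}$ (of any object) nor on the allocation status of objects (so allocating a new object, or changing any $\mathit{closed}$ attribute, does not change the truth value of the invariant of any previously allocated object). Then every program that satisfies $M$'s proof obligations satisfies, in every heap of every execution, the property $$\forall o:\ o.\mathit{closed}\Rightarrow o.\mathit{inv} \qquad\text{(G1)}$$ (quantifying over allocated objects).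
   Context: Every object has a built-in Boolean ghost attribute $\mathit{closed}$; $o$ is open if $o.\mathit{closed}=\mathit{False}$. An object $o$ is concerned with an attribute $a$ of an object $x$ if updating $x.a$ might affect the truth value of $o$'s invariant; objects not concerned with an update keep the truth value of their invariant across it. *)

(* Defs.v *)
From mathcomp Require Import all_boot.
Set Implicit Arguments. Unset Strict Implicit. Unset Printing Implicit Defensive.

Section Heaps.
Variables (Obj : eqType) (Attr : eqType) (Val : Type).

Record heap := Heap {
  alloc  : Obj -> bool;
  is_closed : Obj -> bool;
  field  : Obj -> Attr -> Val }.

(* Elementary steps. [SAlloc x c] allocates the fresh object x, whose
   closed attribute gets value c (the methodology must guarantee c = false);
   [SClosed x b] is the update x.closed := b;
   [SField x a y] is the update x.a := y for an ordinary attribute a. *)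
Inductive step_label :=
| SAlloc of Obj & bool
| SClosed of Obj & bool
| SField of Obj & Attr & Val.

Definition upd_alloc (h : heap) (x : Obj) (c : bool) : heap :=
  Heap (fun o => (o == x) || alloc h o)
       (fun o => if o == x then c else is_closed h o)
       (field h).

Definition upd_closed (h : heap) (x : Obj) (b : bool) : heap :=
  Heap (alloc h) (fun o => if o == x then b else is_closed h o) (field h).

Definition upd_field (h : heap) (x : Obj) (a : Attr) (y : Val) : heap :=
  Heap (alloc h) (is_closed h)
       (fun o b => if (o == x) && (b == a) then y else field h o b).

Definition apply_step (h : heap) (s : step_label) : heap :=
  match s with
  | SAlloc x c => upd_alloc h x c
  | SClosed x b => upd_closed h x b
  | SField x a y => upd_field h x a y
  end.

Definition step_ok (h : heap) (s : step_label) : Prop :=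
  match s with
  | SAlloc x _ => alloc h x = false
  | SClosed x _ => alloc h x = true
  | SField x _ _ => alloc h x = true
  end.

Definition execution (Void : Obj) (n : nat) (h : nat -> heap)
    (s : nat -> step_label) : Prop :=
  (forall o, alloc (h 0) o = (o == Void)) /\
  is_closed (h 0) Void = false /\
  (forall i, i < n -> step_ok (h i) (s i) /\ h i.+1 = apply_step (h i) (s i)).

End Heaps.

(* Main.v *)
Require Import Defs.
From mathcomp Require Import all_boot.
From Stdlib Require Import Classical.

Theorem lemma2 (Obj Attr : eqType) (Val : Type)
  (inv : Obj -> heap Obj Attr Val -> bool)
  (concerned : Obj -> Obj -> Attr -> Prop)
  (* definition of "concerned": non-concerned objects keep the truth value
     of their invariant across an update of x.a *)
  (Hconcerned : forall (h : heap Obj Attr Val) x a y o,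
      ~ concerned o x a -> inv o (upd_field h x a y) = inv o h)
  (* (d): invariants depend neither on closed nor on allocation status *)
  (Hd : forall o (h h' : heap Obj Attr Val), field h = field h' ->
      inv o h = inv o h')
  (Void : Obj) (n : nat) (h : nat -> heap Obj Attr Val)
  (s : nat -> step_label Obj Attr Val)
  (Hexec : execution Void n h s)
  (* (a): freshly allocated objects are open *)
  (Ha : forall i x c, i < n -> s i = SAlloc Attr Val x c -> c = false)
  (* (b): closing x requires x.inv in the pre-state *)
  (Hb : forall i x, i < n -> s i = SClosed Attr Val x true -> inv x (h i))
  (* (c): concerned objects preserve closed-and-invariant *)
  (Hc : forall i x a y, i < n -> s i = SField x a y ->
      forall o, concerned o x a -> is_closed (h i) o -> inv o (h i) ->
        inv o (upd_field (h i) x a y)) :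
  forall i, i <= n -> forall o, alloc (h i) o -> is_closed (h i) o -> inv o (h i).
Proof.
case: Hexec => H0 [Hv Hst].
elim=> [|i IH] Hi o.
  by rewrite H0 => /eqP ->; rewrite Hv.
have Hin : i < n by [].
have [Hok Heq] := Hst i Hin.
have IH' := IH (ltnW Hin).
rewrite Heq.
move: Hok Heq (Ha i) (Hb i) (Hc i).
case: (s i) => [x c|x b|x a y] /= Hok Heq Ha' Hb' Hc'.
- have -> : c = false by exact: (Ha' x c Hin erefl).
  rewrite (Hd o _ (h i)) //.
  case: (o =P x) => [->|Hne] //= Hal Hcl.
  exact: IH'.
- rewrite (Hd o _ (h i)) //.
  case: (o =P x) => [->|Hne] //= Hal.
    clear Heq Ha' Hc'; case: b Hb' => // Hb' _; exact: Hb' x Hin erefl.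
  exact: IH'.
- move=> Hal Hcl.
  have Hinv := IH' o Hal Hcl.
  case: (classic (concerned o x a)) => Hco.
    exact: Hc' x a y Hin erefl o Hco Hcl Hinv.
  by rewrite Hconcerned.
Qed.
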